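(* Let $\mathbb S^1=\{z\in\mathbb C:|z|=1\}$, let $f(z)=z^2$, let $\rho(z)=e^{i\alpha}z$ with $\alpha/2\pi$ irrational, and let $g=\rho\circ f$. Then the IFS $F=\{f,g\}$ on $\mathbb S^1$ has attractor $\mathbb S^1$ (with basin $\mathbb S^1$): $F(\mathbb S^1)=\mathbb S^1$ and $F^{(n)}(K)\to\mathbb S^1$ in the Hausdorff metric for every nonempty compact $K\subseteq\mathbb S^1$. Nevertheless, for every metric $d$ on $\mathbb S^1$ inducing the standard topology, $\mathrm{Lip}(f,d)>1$ and $\mathrm{Lip}(g,d)>1$.
   Context: For a finite IFS $F$ (finite set of continuous self-maps of a metric space $\mathbb X$) and a nonempty compact $K$, $F(K)=\bigcup_{f\in F}f(K)$ and $F^{(n)}$ is its $n$-fold composition. A compact set $A$ is the attractor of $F$ if there is an open $U\supseteq A$ with $F(A)=A$ and $F^{(n)}(K)\to A$ in the Hausdorff metric for every nonempty compact $K\subseteq U$; the largest such $U$ is the basin. $\mathrm{Lip}(f,d)=\sup_{x\neq y} d(f(x),f(y))/d(x,y)$. *)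

(* Defs.v *)
From Stdlib Require Import Reals ZArith List.
From Coquelicot Require Import Coquelicot.
Open Scope R_scope.

Definition S1 (z : C) : Prop := Cmod z = 1.

Definition sqmap (z : C) : C := Cmult z z.
Definition rotmap (alpha : R) (z : C) : C := Cmult (cos alpha, sin alpha) z.
Definition gmap (alpha : R) (z : C) : C := rotmap alpha (sqmap z).

Definition img (h : C -> C) (A : C -> Prop) : C -> Prop :=
  fun w => exists z, A z /\ w = h z.
Definition hutch (alpha : R) (A : C -> Prop) : C -> Prop :=
  fun w => img sqmap A w \/ img (gmap alpha) A w.
Definition hutch_iter (alpha : R) (n : nat) (A : C -> Prop) : C -> Prop :=
  Nat.iter n (hutch alpha) A.

Definition openC (U : C -> Prop) : Prop :=
  forall x, U x -> exists eps, 0 < eps /\ forall y, Cmod (Cminus y x) < eps -> U y.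
Definition compactC (K : C -> Prop) : Prop :=
  forall (I : Type) (U : I -> C -> Prop),
    (forall i, openC (U i)) ->
    (forall x, K x -> exists i, U i x) ->
    exists l : list I, forall x, K x -> exists i, In i l /\ U i x.

Definition dist_pt_set (x : C) (B : C -> Prop) : R :=
  real (Glb_Rbar (fun r => exists b, B b /\ r = Cmod (Cminus x b))).
Definition excess (A B : C -> Prop) : R :=
  real (Lub_Rbar (fun r => exists a, A a /\ r = dist_pt_set a B)).
Definition hausdorff_dist (A B : C -> Prop) : R := Rmax (excess A B) (excess B A).

Definition is_metric_on (X : C -> Prop) (d : C -> C -> R) : Prop :=
  (forall x y, X x -> X y -> 0 <= d x y) /\
  (forall x y, X x -> X y -> (d x y = 0 <-> x = y)) /\
  (forall x y, X x -> X y -> d x y = d y x) /\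
  (forall x y z, X x -> X y -> X z -> d x z <= d x y + d y z).

Definition open_in_dist (X : C -> Prop) (d : C -> C -> R) (U : C -> Prop) : Prop :=
  forall x, U x -> exists eps, 0 < eps /\ forall y, X y -> d x y < eps -> U y.
Definition euclid (x y : C) : R := Cmod (Cminus x y).

Definition induces_std_topology (X : C -> Prop) (d : C -> C -> R) : Prop :=
  forall U : C -> Prop, (forall x, U x -> X x) ->
    (open_in_dist X d U <-> open_in_dist X euclid U).

Definition Lip (X : C -> Prop) (h : C -> C) (d : C -> C -> R) : Rbar :=
  Lub_Rbar (fun r => exists x y, X x /\ X y /\ x <> y /\ r = d (h x) (h y) / d x y).

(* Main.v *)
Require Import Defs.
From Stdlib Require Import Reals ZArith List.
From Coquelicot Require Import Coquelicot.
From Stdlib Require Import Lra Lia Classical Rtopology.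
Open Scope R_scope.

Definition e (t : R) : C := (cos t, sin t).

Lemma Cmod_sq (z : C) : Cmod z ^ 2 = fst z ^ 2 + snd z ^ 2.
Proof. unfold Cmod. rewrite pow2_sqrt; [reflexivity|nra]. Qed.

Lemma S1_iff (z : C) : S1 z <-> fst z ^ 2 + snd z ^ 2 = 1.
Proof.
  unfold S1; split; intro H.
  - rewrite <- Cmod_sq, H; ring.
  - unfold Cmod; rewrite H; apply sqrt_1.
Qed.

Lemma S1_e t : S1 (e t).
Proof. apply S1_iff; simpl. pose proof (sin2_cos2 t). unfold Rsqr in H. nra. Qed.

Lemma sq_e t : sqmap (e t) = e (2 * t).
Proof. unfold sqmap, e, Cmult; simpl. rewrite cos_2a, sin_2a. f_equal; ring. Qed.

Lemma g_e a t : gmap a (e t) = e (a + 2 * t).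
Proof.
  unfold gmap, rotmap. rewrite sq_e. unfold e, Cmult; simpl.
  rewrite cos_plus, sin_plus. f_equal; ring.
Qed.

Lemma opp_e t : Copp (e t) = e (t + PI).
Proof. unfold Copp, e; simpl. rewrite neg_cos, neg_sin. reflexivity. Qed.

Lemma e_period_nat t (k : nat) : e (t + 2 * INR k * PI) = e t.
Proof. unfold e. rewrite cos_period, sin_period. reflexivity. Qed.

Lemma e_period t (k : Z) : e (t + 2 * IZR k * PI) = e t.
Proof.
  destruct k as [|p|p].
  - simpl. f_equal; f_equal; ring.
  - assert (E : IZR (Z.pos p) = INR (Pos.to_nat p)) by (rewrite INR_IZR_INZ, positive_nat_Z; reflexivity).
    rewrite E. apply e_period_nat.
  - rewrite <- (e_period_nat (t + 2 * IZR (Z.neg p) * PI) (Pos.to_nat p)).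
    f_equal. assert (E : IZR (Z.pos p) = INR (Pos.to_nat p)) by (rewrite INR_IZR_INZ, positive_nat_Z; reflexivity).
    rewrite <- E.
    replace (Z.neg p) with (- Z.pos p)%Z by reflexivity. rewrite opp_IZR. ring.
Qed.

Lemma polar (z : C) : S1 z -> exists t, 0 <= t <= 2 * PI /\ z = e t.
Proof.
  intro H. apply S1_iff in H. destruct z as [x y]; simpl in H.
  assert (Hx : -1 <= x <= 1) by nra.
  pose proof (acos_bound x) as Hb.
  assert (Hs : sqrt (1 - x²) = Rabs y).
  { rewrite <- sqrt_Rsqr_abs. f_equal. unfold Rsqr. nra. }
  destruct (Rle_or_lt 0 y) as [Hy|Hy].
  - exists (acos x). split. pose proof PI_RGT_0. lra.
    unfold e. rewrite cos_acos, sin_acos by lra. rewrite Hs, Rabs_pos_eq by lra. reflexivity.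
  - exists (2 * PI - acos x). split. lra.
    unfold e. replace (2 * PI - acos x) with (- acos x + 2 * INR 1 * PI) by (simpl; ring).
    rewrite cos_period, sin_period, cos_neg, sin_neg, cos_acos, sin_acos by lra.
    rewrite Hs, Rabs_left by lra. f_equal; ring.
Qed.

Lemma chord a c : Cmod (Cminus (e a) (e c)) <= Rabs (a - c).
Proof.
  assert (H2 : Cmod (Cminus (e a) (e c)) ^ 2 = 4 * sin ((a - c)/2) ^ 2).
  { rewrite Cmod_sq. unfold Cminus, Cplus, Copp, e; simpl.
    pose proof (cos_2a_sin ((a - c)/2)) as Hc.
    replace (2 * ((a - c) / 2)) with (a - c) in Hc by field.
    unfold Rminus at 1 in Hc. rewrite cos_plus, cos_neg, sin_neg in Hc.
    pose proof (sin2_cos2 a); pose proof (sin2_cos2 c). unfold Rsqr in *. nra. }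
  assert (Hs : Rabs (sin ((a - c)/2)) <= Rabs ((a - c)/2)).
  { destruct (Req_dec ((a-c)/2) 0) as [E|E].
    - rewrite E, sin_0. lra.
    - destruct (Rlt_or_le 0 ((a-c)/2)) as [P|P].
      + pose proof (sin_lt_x _ P). pose proof (SIN_bound ((a-c)/2)). pose proof PI2_1.
        destruct (Rlt_or_le ((a-c)/2) 1).
        * pose proof (sin_gt_0 ((a-c)/2) P ltac:(lra)). unfold Rabs; repeat destruct Rcase_abs; lra.
        * unfold Rabs; repeat destruct Rcase_abs; lra.
      + assert (0 < -((a-c)/2)) by lra. pose proof (sin_lt_x _ H). rewrite sin_neg in H0.
        pose proof (SIN_bound ((a-c)/2)). pose proof PI2_1.
        destruct (Rlt_or_le (-((a-c)/2)) 1).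
        * pose proof (sin_gt_0 (-((a-c)/2)) H ltac:(lra)) as Hq. rewrite sin_neg in Hq. unfold Rabs; repeat destruct Rcase_abs; lra.
        * unfold Rabs; repeat destruct Rcase_abs; lra. }
  assert (Ea : Rabs (a - c) = 2 * Rabs ((a - c)/2)).
  { replace (a - c) with (2 * ((a-c)/2)) at 1 by field. rewrite Rabs_mult, Rabs_pos_eq by lra. reflexivity. }
  assert (Es : sin ((a-c)/2) ^ 2 = Rabs (sin ((a-c)/2)) ^ 2) by (rewrite pow2_abs; reflexivity).
  apply Rsqr_incr_0_var; [|apply Rabs_pos].
  unfold Rsqr. replace (Cmod _ * Cmod _) with (Cmod (Cminus (e a) (e c)) ^ 2) by ring.
  rewrite H2, Ea, Es. pose proof (Rabs_pos (sin ((a - c) / 2))). nra.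
Qed.

Lemma hutch_sub a (A : C -> Prop) : (forall z, A z -> S1 z) -> forall z, hutch a A z -> S1 z.
Proof.
  intros HA z [[w [Hw ->]]|[w [Hw ->]]]; destruct (polar w (HA w Hw)) as [t [_ ->]].
  - rewrite sq_e; apply S1_e.
  - rewrite g_e; apply S1_e.
Qed.

Lemma hutch_S1 a z : hutch a S1 z <-> S1 z.
Proof.
  split. apply hutch_sub; auto.
  intro H. destruct (polar z H) as [t [_ ->]]. left. exists (e (t/2)). split. apply S1_e.
  rewrite sq_e. f_equal. field.
Qed.

Lemma iter_S1 a K : (forall z, K z -> S1 z) -> forall n z, hutch_iter a n K z -> S1 z.
Proof.
  intros HK n; induction n as [|n IH]; intros z Hz. apply HK, Hz.
  simpl in Hz. eapply hutch_sub; [|exact Hz]. exact IH.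
Qed.

Lemma iter_orbit a K t0 : K (e t0) -> forall n m, (m < 2 ^ n)%nat ->
  hutch_iter a n K (e (2 ^ n * t0 + INR m * a)).
Proof.
  intros HK n; induction n as [|n IH]; intros m Hm.
  - simpl in Hm. assert (m = 0%nat) by lia. subst. simpl.
    replace (1 * t0 + 0 * a) with t0 by ring. exact HK.
  - simpl. destruct (Nat.Even_or_Odd m) as [[k Hk]|[k Hk]]; subst m.
    + assert (Hk : (k < 2 ^ n)%nat) by (simpl in Hm; lia).
      left. exists (e (2 ^ n * t0 + INR k * a)). split. apply IH, Hk.
      rewrite sq_e. f_equal. rewrite mult_INR. simpl. ring.
    + assert (Hk : (k < 2 ^ n)%nat) by (simpl in Hm; lia).
      right. exists (e (2 ^ n * t0 + INR k * a)). split. apply IH, Hk.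
      rewrite g_e. f_equal. rewrite plus_INR, mult_INR. simpl. ring.
Qed.

Lemma real_between (g : Rbar) (x y : R) : Rbar_le x g -> Rbar_le g y -> x <= real g <= y.
Proof. destruct g; simpl; intros; tauto. Qed.

Lemma dist_pt_S1 a : S1 a -> dist_pt_set a S1 = 0.
Proof.
  intro Ha. unfold dist_pt_set.
  destruct (Glb_Rbar_correct (fun r => exists b, S1 b /\ r = Cmod (Cminus a b))) as [Hlb Hg].
  assert (H1 : Rbar_le (Glb_Rbar (fun r => exists b, S1 b /\ r = Cmod (Cminus a b))) 0).
  { apply Hlb. exists a. split; auto. unfold Cminus. rewrite Cplus_opp_r, Cmod_0. reflexivity. }
  assert (H2 : Rbar_le 0 (Glb_Rbar (fun r => exists b, S1 b /\ r = Cmod (Cminus a b)))).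
  { apply Hg. intros r [b [_ ->]]. simpl. apply Cmod_ge_0. }
  pose proof (real_between _ _ _ H2 H1). lra.
Qed.

Lemma dist_pt_bound s (A : C -> Prop) a : A a -> 0 <= dist_pt_set s A <= Cmod (Cminus s a).
Proof.
  intro Ha. unfold dist_pt_set.
  destruct (Glb_Rbar_correct (fun r => exists b, A b /\ r = Cmod (Cminus s b))) as [Hlb Hg].
  apply real_between.
  - apply Hg. intros r [b [_ ->]]. simpl. apply Cmod_ge_0.
  - apply Hlb. exists a. auto.
Qed.

Lemma haus_small (A : C -> Prop) eps : 0 < eps -> (forall z, A z -> S1 z) -> (exists z, A z) ->
  (forall s, S1 s -> exists a, A a /\ Cmod (Cminus s a) < eps / 2) ->
  hausdorff_dist A S1 < eps.
Proof.
  intros He HA [z0 Hz0] Hd. unfold hausdorff_dist, excess.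
  assert (E1 : 0 <= real (Lub_Rbar (fun r => exists a, A a /\ r = dist_pt_set a S1)) <= 0).
  { destruct (Lub_Rbar_correct (fun r => exists a, A a /\ r = dist_pt_set a S1)) as [Hub Hl].
    apply real_between.
    - apply Hub. exists z0. split; auto. rewrite dist_pt_S1; auto.
    - apply Hl. intros r [a [Ha ->]]. rewrite dist_pt_S1; auto. simpl; lra. }
  assert (E2 : 0 <= real (Lub_Rbar (fun r => exists a, S1 a /\ r = dist_pt_set a A)) <= eps / 2).
  { destruct (Lub_Rbar_correct (fun r => exists a, S1 a /\ r = dist_pt_set a A)) as [Hub Hl].
    apply real_between.
    - destruct (Hd (e 0) (S1_e 0)) as [a [Ha _]].
      pose proof (dist_pt_bound (e 0) A a Ha).
      apply Rbar_le_trans with (y := Finite (dist_pt_set (e 0) A)). simpl; lra.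
      apply Hub. exists (e 0). split. apply S1_e. reflexivity.
    - apply Hl. intros r [s [Hs ->]]. destruct (Hd s Hs) as [a [Ha Ha2]].
      pose proof (dist_pt_bound s A a Ha). simpl. lra. }
  apply Rmax_lub_lt; lra.
Qed.

Lemma php : forall N (f : nat -> nat), (forall m, (m <= N)%nat -> (f m < N)%nat) ->
  exists i j, (i < j <= N)%nat /\ f i = f j.
Proof.
  induction N as [|N IH]; intros f Hf.
  - specialize (Hf 0%nat (le_n _)). lia.
  - destruct (classic (exists i, (i <= N)%nat /\ f i = f (S N))) as [[i [Hi E]]|Hn].
    + exists i, (S N). split; [lia|exact E].
    + set (g m := if Nat.ltb (f m) (f (S N)) then f m else (f m - 1)%nat).
      destruct (IH g) as [i [j [Hij E]]].
      * intros m Hm. unfold g. pose proof (Hf m ltac:(lia)). pose proof (Hf (S N) (le_n _)).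
        destruct (Nat.ltb_spec (f m) (f (S N))). lia.
        assert (f m <> f (S N)) by (intro; apply Hn; exists m; auto). lia.
      * exists i, j. split; [lia|].
        unfold g in E.
        assert (f i <> f (S N)) by (intro; apply Hn; exists i; split; auto; lia).
        assert (f j <> f (S N)) by (intro; apply Hn; exists j; split; auto; lia).
        destruct (Nat.ltb_spec (f i) (f (S N))), (Nat.ltb_spec (f j) (f (S N))); lia.
Qed.

Definition fr (r : R) : R := r - IZR (Int_part r).

Lemma fr_bound r : 0 <= fr r < 1.
Proof. unfold fr. pose proof (base_Int_part r). lra. Qed.

Lemma dirichlet x : (forall (p q : Z), q <> 0%Z -> x <> IZR p / IZR q) ->
  forall N : nat, (0 < N)%nat -> exists (q : nat) (k : Z), (0 < q)%nat /\
    0 < Rabs (INR q * x - IZR k) < 1 / INR N.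
Proof.
  intros Hx N HN.
  assert (HNr : 0 < INR N) by (apply lt_0_INR; lia).
  set (f m := Z.to_nat (Int_part (INR N * fr (INR m * x)))).
  assert (Hbin : forall m, 0 <= IZR (Int_part (INR N * fr (INR m * x))) <= INR N * fr (INR m * x) /\
     INR N * fr (INR m * x) < IZR (Int_part (INR N * fr (INR m * x))) + 1 /\
     (0 <= Int_part (INR N * fr (INR m * x)) < Z.of_nat N)%Z).
  { intro m. pose proof (fr_bound (INR m * x)). pose proof (base_Int_part (INR N * fr (INR m * x))).
    assert (H1 : -1 < IZR (Int_part (INR N * fr (INR m * x)))) by nra.
    assert (H2 : IZR (Int_part (INR N * fr (INR m * x))) < IZR (Z.of_nat N)) by (rewrite <- INR_IZR_INZ; nra).
    apply lt_IZR in H1. apply lt_IZR in H2.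
    assert (0 <= IZR (Int_part (INR N * fr (INR m * x)))) by (apply IZR_le; lia).
    repeat split; try lra; lia. }
  destruct (php N f) as [i [j [Hij E]]].
  { intros m _. unfold f. destruct (Hbin m) as [_ [_ Hb]]. lia. }
  unfold f in E. destruct (Hbin i) as [Bi1 [Bi2 Bi3]]. destruct (Hbin j) as [Bj1 [Bj2 Bj3]].
  apply Z2Nat.inj in E; try lia. rewrite E in Bi1, Bi2.
  exists (j - i)%nat, (Int_part (INR j * x) - Int_part (INR i * x))%Z. split; [lia|].
  assert (Heq : INR (j - i) * x - IZR (Int_part (INR j * x) - Int_part (INR i * x)) = fr (INR j * x) - fr (INR i * x)).
  { rewrite minus_INR by lia. rewrite minus_IZR. unfold fr. ring. }
  rewrite Heq. split.
  - apply Rabs_pos_lt. intro H0. rewrite <- Heq in H0.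
    apply (Hx (Int_part (INR j * x) - Int_part (INR i * x))%Z (Z.of_nat (j - i))).
    lia. rewrite <- INR_IZR_INZ.
    assert (0 < INR (j - i)) by (apply lt_0_INR; lia).
    apply Rmult_eq_reg_r with (INR (j-i)); [| lra]. unfold Rdiv. rewrite Rmult_assoc, Rinv_l by lra. lra.
  - assert (Habs : Rabs (INR N * (fr (INR j * x) - fr (INR i * x))) < 1).
    { apply Rabs_def1; nra. }
    rewrite Rabs_mult, Rabs_pos_eq in Habs by lra.
    apply Rmult_lt_reg_l with (INR N); [lra|]. field_simplify; lra.
Qed.

Lemma dense_step b : 0 < b -> exists J : nat, forall v, exists (j : nat) (k : Z),
  (j <= J)%nat /\ Rabs (v + 2 * PI * IZR k - INR j * b) < b.
Proof.
  intro Hb. pose proof PI_RGT_0 as Hpi.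
  exists (Z.to_nat (up (2 * PI / b))). intro v.
  set (k := (- Int_part (v / (2 * PI)))%Z).
  set (w := v + 2 * PI * IZR k).
  assert (Hw : 0 <= w < 2 * PI).
  { unfold w, k. rewrite opp_IZR. pose proof (base_Int_part (v / (2 * PI))).
    assert (v = 2 * PI * (v / (2 * PI))) by (field; lra).
    set (y := v / (2*PI)) in *. set (z := IZR (Int_part y)) in *. nra. }
  set (j := Int_part (w / b)).
  pose proof (base_Int_part (w / b)) as Hj. fold j in Hj.
  assert (Hj0 : (0 <= j)%Z).
  { apply le_IZR. assert (0 <= w / b) by (apply Rdiv_le_0_compat; lra).
    assert (-1 < IZR j) by lra. apply lt_IZR in H0. apply IZR_le. lia. }
  exists (Z.to_nat j), k. split.
  - pose proof (archimed (2 * PI / b)) as [Hu _].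
    assert (w / b < 2 * PI / b) by (apply Rmult_lt_compat_r; [apply Rinv_0_lt_compat|]; lra).
    assert (IZR j < IZR (up (2 * PI / b))) by lra. apply lt_IZR in H0. lia.
  - rewrite INR_IZR_INZ, Z2Nat.id by lia. fold w.
    assert (w = b * (w / b)) by (field; lra).
    apply Rabs_def1; nra.
Qed.

Lemma density alpha : (forall (p q : Z), q <> 0%Z -> alpha / (2 * PI) <> IZR p / IZR q) ->
  forall eps, 0 < eps -> exists M : nat, forall t u, exists m : nat, (m < M)%nat /\
    Cmod (Cminus (e u) (e (t + INR m * alpha))) < eps.
Proof.
  intros Hirr eps He. pose proof PI_RGT_0 as Hpi.
  set (N := S (Z.to_nat (up (2 * PI / eps)))).
  destruct (dirichlet _ Hirr N ltac:(unfold N; lia)) as [q [k [Hq [H1 H2]]]].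
  set (beta := INR q * alpha - 2 * PI * IZR k).
  assert (Hbeta : INR q * alpha = beta + 2 * PI * IZR k) by (unfold beta; ring).
  assert (Hbx : beta = 2 * PI * (INR q * (alpha / (2 * PI)) - IZR k)) by (unfold beta; field; lra).
  assert (Hbpos : 0 < Rabs beta) by (rewrite Hbx, Rabs_mult, Rabs_pos_eq; nra).
  assert (Hbeps : Rabs beta < eps).
  { rewrite Hbx, Rabs_mult, Rabs_pos_eq by lra.
    assert (HN : 2 * PI / eps < INR N).
    { unfold N. rewrite S_INR, INR_IZR_INZ.  pose proof (archimed (2 * PI / eps)) as [Hu _].
      destruct (Z_lt_le_dec (up (2 * PI / eps)) 0).
      - assert (0 < 2 * PI / eps) by (apply Rdiv_lt_0_compat; lra).
        assert (Hz : IZR 0 < IZR (up (2 * PI / eps))) by lra. apply lt_IZR in Hz. lia.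
      - rewrite Z2Nat.id by lia. lra. }
    assert (0 < INR N) by (apply lt_0_INR; unfold N; lia).
    assert (2 * PI < eps * INR N).
    { apply (Rmult_lt_compat_l eps) in HN; [|lra]. replace (eps * (2 * PI / eps)) with (2 * PI) in HN by (field; lra). lra. }
    assert (Rabs (INR q * (alpha / (2 * PI)) - IZR k) * INR N < 1).
    { apply (Rmult_lt_compat_r (INR N)) in H2; [|lra]. replace (1 / INR N * INR N) with 1 in H2 by (field; lra). lra. }
    nra. }
  destruct (dense_step (Rabs beta) Hbpos) as [J HJ].
  exists (S (q * J)). intros t u.
  destruct (Rle_or_lt 0 beta) as [Hs|Hs].
  - rewrite Rabs_pos_eq in * by lra.
    destruct (HJ (u - t)) as [j [k' [Hj Hk]]].
    exists (q * j)%nat. split. apply Nat.lt_succ_r, Nat.mul_le_mono_l, Hj.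
    assert (Ep : t + INR (q * j) * alpha = t + INR j * beta + 2 * IZR (Z.of_nat j * k) * PI).
    { rewrite mult_INR, mult_IZR, <- INR_IZR_INZ.
      replace (INR q * INR j * alpha) with (INR j * (INR q * alpha)) by ring. rewrite Hbeta. ring. }
    rewrite Ep, e_period, <- (e_period u k').
    eapply Rle_lt_trans. apply chord.
    replace (u + 2 * IZR k' * PI - (t + INR j * beta)) with (u - t + 2 * PI * IZR k' - INR j * beta) by ring.
    lra.
  - rewrite Rabs_left in * by lra.
    destruct (HJ (t - u)) as [j [k' [Hj Hk]]].
    exists (q * j)%nat. split. apply Nat.lt_succ_r, Nat.mul_le_mono_l, Hj.
    assert (Ep : t + INR (q * j) * alpha = t + INR j * beta + 2 * IZR (Z.of_nat j * k) * PI).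
    { rewrite mult_INR, mult_IZR, <- INR_IZR_INZ.
      replace (INR q * INR j * alpha) with (INR j * (INR q * alpha)) by ring. rewrite Hbeta. ring. }
    rewrite Ep, e_period, <- (e_period u (- k')).
    eapply Rle_lt_trans. apply chord.
    replace (u + 2 * IZR (- k') * PI - (t + INR j * beta)) with (- (t - u + 2 * PI * IZR k' - INR j * (- beta))) by (rewrite opp_IZR; ring).
    rewrite Rabs_Ropp. lra.
Qed.

Lemma part2 alpha : (forall (p q : Z), q <> 0%Z -> alpha / (2 * PI) <> IZR p / IZR q) ->
  forall K : C -> Prop, (forall z, K z -> S1 z) -> (exists z, K z) ->
     forall eps, 0 < eps -> exists N : nat, forall n, (N <= n)%nat ->
       hausdorff_dist (hutch_iter alpha n K) S1 < eps.
Proof.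
  intros Hirr K HK [z0 Hz0] eps He.
  destruct (polar z0 (HK z0 Hz0)) as [t0 [_ E0]]. subst z0.
  destruct (density alpha Hirr (eps / 2) ltac:(lra)) as [M HM].
  exists M. intros n Hn.
  assert (HMn : (M < 2 ^ n)%nat).
  { pose proof (Nat.pow_gt_lin_r 2 M ltac:(lia)). pose proof (Nat.pow_le_mono_r 2 M n ltac:(lia) Hn). lia. }
  apply haus_small; auto.
  - apply iter_S1; auto.
  - exists (e (2 ^ n * t0 + INR 0 * alpha)). apply iter_orbit; auto. lia.
  - intros s Hs. destruct (polar s Hs) as [u [_ ->]].
    destruct (HM (2 ^ n * t0) u) as [m [Hm Hd]].
    exists (e (2 ^ n * t0 + INR m * alpha)). split; auto. apply iter_orbit; auto. lia.
Qed.

Lemma Cmod_tri a b c : Cmod (Cminus a c) <= Cmod (Cminus a b) + Cmod (Cminus b c).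
Proof.
  replace (Cminus a c) with (Cplus (Cminus a b) (Cminus b c)).
  apply Cmod_triangle. unfold Cminus, Cplus, Copp; simpl. f_equal; ring.
Qed.

Lemma Cmod_sym a b : Cmod (Cminus a b) = Cmod (Cminus b a).
Proof. unfold Cmod, Cminus, Cplus, Copp; simpl. f_equal. ring. Qed.

Lemma S1_cover (P : C -> C -> Prop) :
  (forall w, S1 w -> exists eta, 0 < eta /\ forall z, S1 z -> Cmod (Cminus z w) < eta -> P w z) ->
  exists l : list C, (forall w, In w l -> S1 w) /\ forall z, S1 z -> exists w, In w l /\ P w z.
Proof.
  intro HP.
  set (ff := fun t y => 0 <= t <= 2 * PI /\ exists eta, 0 < eta /\
     (forall z, S1 z -> Cmod (Cminus z (e t)) < eta -> P (e t) z) /\ Cmod (Cminus (e y) (e t)) < eta).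
  assert (Hc : forall x, (exists y, ff x y) -> (fun t => 0 <= t <= 2 * PI) x).
  { intros x [y [H _]]. exact H. }
  set (fam := mkfamily (fun t => 0 <= t <= 2 * PI) ff Hc).
  destruct (compact_P3 0 (2 * PI) fam) as [D [Hcov [l Hl]]].
  - split.
    + intros y Hy. exists y. simpl. split; auto. destruct (HP (e y) (S1_e y)) as [eta [Heta H]].
      exists eta. split; auto. split; auto. unfold Cminus. rewrite Cplus_opp_r, Cmod_0. exact Heta.
    + intros t y [Ht [eta [Heta [H Hy]]]].
      exists (mkposreal (eta - Cmod (Cminus (e y) (e t))) ltac:(lra)).
      intros y' Hy'. unfold disc in Hy'; simpl in Hy'. simpl. split; auto. exists eta.
      split; auto. split; auto.
      pose proof (Cmod_tri (e y') (e y) (e t)). pose proof (chord y' y). lra.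
  - exists (map e l). split.
    + intros w Hw. apply in_map_iff in Hw. destruct Hw as [t [<- _]]. apply S1_e.
    + intros z Hz. destruct (polar z Hz) as [y [Hy ->]].
      destruct (Hcov y Hy) as [t [[Ht [eta [Heta [H Hyt]]]] Dt]].
      exists (e t). split.
      * apply in_map. apply Hl. split; auto.
      * apply H; auto.
Qed.

Lemma S1_opp z : S1 z -> S1 (Copp z).
Proof. intro H. apply S1_iff in H. apply S1_iff. simpl. nra. Qed.

Lemma S1_neq_opp z : S1 z -> z <> Copp z.
Proof.
  intros H E. apply S1_iff in H. destruct z as [x y]. unfold Copp in E; simpl in *.
  injection E; intros. nra.
Qed.

Lemma d_cont d : is_metric_on S1 d -> induces_std_topology S1 d ->
  forall x r, S1 x -> 0 < r -> exists eta, 0 < eta /\ forall y, S1 y -> Cmod (Cminus y x) < eta -> d x y < r.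
Proof.
  intros [Hpos [Hzero [Hsym Htri]]] Htop x r Hx Hr.
  set (U := fun y => S1 y /\ d x y < r).
  assert (HU : open_in_dist S1 d U).
  { intros y [Hy Hyr]. exists (r - d x y). split. lra.
    intros z Hz Hyz. split; auto. pose proof (Htri x y z Hx Hy Hz). lra. }
  apply (Htop U (fun y H => proj1 H)) in HU.
  destruct (HU x) as [eta [Heta H]].
  { split; auto. assert (d x x = 0) by (apply Hzero; auto). lra. }
  exists eta. split; auto. intros y Hy Hyx. apply H; auto. unfold euclid. rewrite Cmod_sym. exact Hyx.
Qed.

Lemma list_min (F : C -> R) (l : list C) : (forall w, In w l -> 0 < F w) ->
  exists delta, 0 < delta /\ forall w, In w l -> delta <= F w.
Proof.
  induction l as [|a l IH]; intro H.
  - exists 1. split. lra. intros w [].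
  - destruct IH as [dl [Hdl Hl]]. intros w Hw; apply H; right; auto.
    exists (Rmin (F a) dl). split. apply Rmin_pos; auto. apply H; left; auto.
    intros w [<-|Hw]. apply Rmin_l. eapply Rle_trans. apply Rmin_r. auto.
Qed.

Section Lip.
Variable h : C -> C.
Variable d : C -> C -> R.
Hypothesis Hmet : is_metric_on S1 d.
Hypothesis Htop : induces_std_topology S1 d.
Hypothesis Hh : forall z, S1 z -> S1 (h z).
Hypothesis Hodd : forall z, h (Copp z) = h z.
Hypothesis Hsurj : forall w, S1 w -> exists u, S1 u /\ h u = w.

Lemma d_pos x y : S1 x -> S1 y -> x <> y -> 0 < d x y.
Proof.
  intros Hx Hy Hxy. destruct Hmet as [Hpos [Hzero _]].
  destruct (Hpos x y Hx Hy) as [|E]; auto. symmetry in E. apply Hzero in E; auto. contradiction.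
Qed.

Lemma delta_exists : exists delta, 0 < delta /\ forall z, S1 z -> delta < d z (Copp z).
Proof.
  pose proof Hmet as [Hpos [Hzero [Hsym Htri]]].
  destruct (S1_cover (fun w z => d w (Copp w) / 3 < d z (Copp z))) as [l [Hl Hcov]].
  - intros w Hw. set (a := d w (Copp w)).
    assert (Ha : 0 < a) by (apply d_pos; auto using S1_opp, S1_neq_opp).
    destruct (d_cont d Hmet Htop w (a/3) Hw ltac:(lra)) as [e1 [He1 H1]].
    destruct (d_cont d Hmet Htop (Copp w) (a/3) (S1_opp w Hw) ltac:(lra)) as [e2 [He2 H2]].
    exists (Rmin e1 e2). split. apply Rmin_pos; auto. intros z Hz Hzw.
    assert (A1 : d w z < a/3) by (apply H1; auto; eapply Rlt_le_trans; [exact Hzw|apply Rmin_l]).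
    assert (A2 : d (Copp w) (Copp z) < a/3).
    { apply H2. apply S1_opp; auto.
      replace (Cminus (Copp z) (Copp w)) with (Copp (Cminus z w)) by (unfold Cminus, Cplus, Copp; simpl; f_equal; ring).
      rewrite Cmod_opp. eapply Rlt_le_trans; [exact Hzw|apply Rmin_r]. }
    pose proof (S1_opp w Hw). pose proof (S1_opp z Hz).
    pose proof (Htri w z (Copp w) Hw Hz H).
    pose proof (Htri z (Copp z) (Copp w) Hz H0 H).
    rewrite (Hsym (Copp z) (Copp w)) in H4 by auto.
    fold a in H3. lra.
  - destruct (list_min (fun w => d w (Copp w) / 3) l) as [delta [Hd Hdl]].
    + intros w Hw. assert (0 < d w (Copp w)) by (apply d_pos; auto using S1_opp, S1_neq_opp). lra.
    + exists delta. split; auto. intros z Hz. destruct (Hcov z Hz) as [w [Hw Hwz]].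
      specialize (Hdl w Hw). simpl in Hdl. lra.
Qed.

Hypothesis Hnon : forall x y, S1 x -> S1 y -> d (h x) (h y) <= d x y.

Lemma step delta : 0 < delta -> (forall z, S1 z -> delta < d z (Copp z)) ->
  forall T, List.Forall S1 T -> ForallOrdPairs (fun x y => delta <= d x y) T ->
  exists T', List.Forall S1 T' /\ ForallOrdPairs (fun x y => delta <= d x y) T' /\
    length T' = (2 * length T)%nat /\ forall v, In v T' -> In (h v) T.
Proof.
  intros Hd Hdz T. induction T as [|a T IH]; intros HS HF.
  - exists nil. split. constructor. split. constructor. split. reflexivity. intros v [].
  - inversion HS as [|? ? Ha HT]; subst. inversion HF as [|? ? HaT HFT]; subst.
    destruct (IH HT HFT) as [T' [HS' [HF' [Hlen Hin]]]].
    destruct (Hsurj a Ha) as [u [Hu Hua]].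
    assert (Hcross : forall w v, S1 w -> h w = a -> In v T' -> delta <= d w v).
    { intros w v Hw Hwa Hv. pose proof (Hin v Hv) as Hhv.
      rewrite List.Forall_forall in HaT. specialize (HaT _ Hhv).
      rewrite List.Forall_forall in HS'. specialize (HS' v Hv).
      rewrite <- Hwa in HaT. pose proof (Hnon w v Hw HS'). lra. }
    exists (u :: Copp u :: T'). repeat split.
    + constructor; auto. constructor; auto. apply S1_opp; auto.
    + constructor.
      * constructor. apply Rlt_le, Hdz; auto.
        rewrite List.Forall_forall. intros v Hv. apply (Hcross u); auto.
      * constructor; auto. rewrite List.Forall_forall. intros v Hv. apply (Hcross (Copp u)); auto.
        apply S1_opp; auto. rewrite Hodd; auto.
    + simpl. rewrite Hlen. lia.
    + intros v [<-|[<-|Hv]]. left; auto. left; rewrite Hodd; auto. right; auto.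
Qed.

Lemma tree delta : 0 < delta -> (forall z, S1 z -> delta < d z (Copp z)) ->
  forall n, exists T, List.Forall S1 T /\ ForallOrdPairs (fun x y => delta <= d x y) T /\ length T = (2 ^ n)%nat.
Proof.
  intros Hd Hdz n. induction n as [|n IH].
  - exists (e 0 :: nil). repeat constructor. apply S1_e.
  - destruct IH as [T [HS [HF Hl]]]. destruct (step delta Hd Hdz T HS HF) as [T' [? [? [? _]]]].
    exists T'. repeat split; auto. rewrite H1, Hl. simpl. lia.
Qed.

Lemma php_list delta : forall T c, List.Forall S1 T -> ForallOrdPairs (fun x y => delta <= d x y) T ->
  (forall w, In w c -> S1 w) ->
  (forall t, In t T -> exists w, In w c /\ d w t < delta / 2) -> (length T <= length c)%nat.
Proof.
  pose proof Hmet as [Hpos [Hzero [Hsym Htri]]].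
  induction T as [|a T IH]; intros c HS HF Hc Hcov. simpl; lia.
  inversion HS as [|? ? Ha HT]; subst. inversion HF as [|? ? HaT HFT]; subst.
  destruct (Hcov a (or_introl eq_refl)) as [w [Hw Hwa]].
  destruct (in_split w c Hw) as [c1 [c2 ->]].
  assert (length T <= length (c1 ++ c2))%nat.
  { apply IH; auto.
    - intros w' Hw'. apply Hc. apply in_app_or in Hw'. apply in_or_app. simpl. tauto.
    - intros t Ht. destruct (Hcov t (or_intror Ht)) as [w' [Hw' Hw't]].
      exists w'. split; auto.
      destruct (classic (w' = w)) as [->|Hne].
      + exfalso. rewrite List.Forall_forall in HaT, HT. specialize (HaT t Ht). specialize (HT t Ht).
        assert (S1 w) by (apply Hc; apply in_or_app; simpl; auto).
        pose proof (Htri a w t Ha H HT). rewrite (Hsym a w) in H0 by auto. lra.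
      + apply in_app_or in Hw'. apply in_or_app. simpl in Hw'. destruct Hw' as [?|[?|?]]; auto.
        congruence. }
  rewrite length_app in *. simpl. lia.
Qed.

End Lip.


Lemma lip_gt h d : is_metric_on S1 d -> induces_std_topology S1 d ->
  (forall z, S1 z -> S1 (h z)) -> (forall z, h (Copp z) = h z) ->
  (forall w, S1 w -> exists u, S1 u /\ h u = w) -> Rbar_lt 1 (Lip S1 h d).
Proof.
  intros Hmet Htop Hh Hodd Hsurj.
  destruct (classic (Rbar_lt 1 (Lip S1 h d))) as [H|H]; auto. exfalso. apply Rbar_not_lt_le in H.
  pose proof Hmet as [Hpos [Hzero [Hsym Htri]]].
  assert (Hnon : forall x y, S1 x -> S1 y -> d (h x) (h y) <= d x y).
  { intros x y Hx Hy. destruct (classic (x = y)) as [->|Hne].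
    - assert (d (h y) (h y) = 0) by (apply Hzero; auto). assert (d y y = 0) by (apply Hzero; auto). lra.
    - assert (Hr : Rbar_le (d (h x) (h y) / d x y) (Lip S1 h d)).
      { apply (proj1 (Lub_Rbar_correct _)). exists x, y. auto. }
      pose proof (Rbar_le_trans _ _ (Finite 1) Hr H) as Hr1. simpl in Hr1.
      pose proof (d_pos d Hmet x y Hx Hy Hne) as Hdp.
      apply (Rmult_le_compat_r (d x y)) in Hr1; [|lra].
      unfold Rdiv in Hr1. rewrite Rmult_assoc, Rinv_l in Hr1 by lra. lra. }
  destruct (delta_exists d Hmet Htop) as [delta [Hd Hdz]].
  destruct (S1_cover (fun w z => d w z < delta / 2)) as [c [Hc Hcov]].
  { intros w Hw. apply (d_cont d Hmet Htop w (delta/2) Hw). lra. }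
  destruct (tree h d Hodd Hsurj Hnon delta Hd Hdz (length c)) as [T [HS [HF Hl]]].
  assert (Hle : (length T <= length c)%nat).
  { apply (php_list d Hmet delta T c HS HF Hc). intros t Ht.
    rewrite List.Forall_forall in HS. apply Hcov, HS, Ht. }
  pose proof (Nat.pow_gt_lin_r 2 (length c) ltac:(lia)). lia.
Qed.

Theorem mainTheorem2 (alpha : R)
  (Hirr : ~ exists (p q : Z), q <> 0%Z /\ alpha / (2 * PI) = IZR p / IZR q) :
  (* F(S^1) = S^1 *)
  (forall z, hutch alpha S1 z <-> S1 z) /\
  (* F^(n)(K) -> S^1 in the Hausdorff metric for all nonempty compact K ⊆ S^1 *)
  (forall K : C -> Prop, (forall z, K z -> S1 z) -> (exists z, K z) -> compactC K ->
     forall eps, 0 < eps -> exists N : nat, forall n, (N <= n)%nat ->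
       hausdorff_dist (hutch_iter alpha n K) S1 < eps) /\
  (* every metric inducing the standard topology has Lip(f,d) > 1 and Lip(g,d) > 1 *)
  (forall d : C -> C -> R, is_metric_on S1 d -> induces_std_topology S1 d ->
     Rbar_lt (Finite 1) (Lip S1 sqmap d) /\ Rbar_lt (Finite 1) (Lip S1 (gmap alpha) d)).
Proof.
  assert (Hirr' : forall (p q : Z), q <> 0%Z -> alpha / (2 * PI) <> IZR p / IZR q).
  { intros p q Hq E. apply Hirr. exists p, q. auto. }
  split; [intro z; apply hutch_S1|]. split.
  { intros K HK Hne _. apply part2; auto. }
  intros d Hm Ht. split; apply lip_gt; auto.
  - intros z Hz. destruct (polar z Hz) as [t [_ ->]]. rewrite sq_e. apply S1_e.
  - intro z. unfold sqmap, Copp, Cmult; simpl. f_equal; ring.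
  - intros w Hw. destruct (polar w Hw) as [t [_ ->]]. exists (e (t/2)). split. apply S1_e.
    rewrite sq_e. f_equal. field.
  - intros z Hz. destruct (polar z Hz) as [t [_ ->]]. rewrite g_e. apply S1_e.
  - intro z. unfold gmap, rotmap, sqmap, Copp, Cmult; simpl. f_equal; ring.
  - intros w Hw. destruct (polar w Hw) as [t [_ ->]]. exists (e ((t - alpha)/2)). split. apply S1_e.
    rewrite g_e. f_equal. field.
Qed.
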